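(* Let $G$ be a finite group, $\varphi\in\mathrm{Aut}(G)$, and $U$ a subgroup with $\Delta(G,\varphi)\leq U\leq G\times G$. Suppose that for some $i\in\{1,2\}$ we have (i) $k_i(U)\cap G'\neq 1$, and (ii) $k_i(U)\leq Z(G)$. Then $U$ is not extensible.
   Context: $\Delta(G,\varphi)=\{(g,\varphi(g)):g\in G\}$. For $U\leq G\times G$: $k_1(U)=\{g:(g,1)\in U\}$, $k_2(U)=\{h:(1,h)\in U\}$; such $U$ is a subdirect product of $G$ and $G$. $G'$ is the commutator subgroup, $Z(G)$ the center. An abelian group $A$ satisfies the Hypothesis (with set of primes $\pi$) if there is a unique set of primes $\pi$ such that for every $n\in\mathbb{N}$ the $n$-torsion part of $A$ is cyclic of order $n_\pi$ (the $\pi$-part of $n$). $U$ is $A$-extensible if every homomorphism $U\to A$ extends to a homomorphism $G\times G\to A$; $U$ is extensible if it is $A$-extensible for every abelian group $A$ satisfying the Hypothesis. *)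

(* Defs.v *)
From HB Require Import structures.
From mathcomp Require Import all_boot all_order all_algebra all_fingroup all_solvable.
Set Implicit Arguments. Unset Strict Implicit. Unset Printing Implicit Defensive.
Import GRing.Theory.
Local Open Scope group_scope.

Definition Delta (gT : finGroupType) (G : {set gT}) (phi : {perm gT})
  : {set gT * gT} := [set (g, phi g) | g in G].

Definition k1 (gT : finGroupType) (U : {set gT * gT}) : {set gT} :=
  [set g | (g, 1) \in U].
Definition k2 (gT : finGroupType) (U : {set gT * gT}) : {set gT} :=
  [set h | (1, h) \in U].

Definition torsion_cyclic_of_order (A : zmodType) (n m : nat) : Prop :=
  exists a : A,
    [/\ (a *+ m = 0)%R,
        (forall k, 0 < k < m -> (a *+ k != 0)%R) &
        (forall x : A, (x *+ n = 0)%R <-> exists k, x = (a *+ k)%R)].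

Definition torsion_prop (A : zmodType) (pi : nat_pred) : Prop :=
  forall n, 0 < n -> torsion_cyclic_of_order A n (n`_pi).

Definition prime_set (pi : nat_pred) : Prop := forall p, p \in pi -> prime p.

Definition Hypothesis_ab (A : zmodType) : Prop :=
  exists pi : nat_pred,
    [/\ prime_set pi, torsion_prop A pi &
        forall pi' : nat_pred, prime_set pi' -> torsion_prop A pi' -> pi' =i pi].

Definition hom_on (gT : finGroupType) (A : zmodType) (H : {set gT}) (f : gT -> A)
  : Prop := forall x y, x \in H -> y \in H -> f (x * y) = (f x + f y)%R.

Definition A_extensible (gT : finGroupType) (G : {set gT}) (U : {set gT * gT})
  (A : zmodType) : Prop :=
  forall f : gT * gT -> A, hom_on U f ->
    exists g : gT * gT -> A, hom_on (setX G G) g /\ {in U, forall u, g u = f u}.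

Definition extensible (gT : finGroupType) (G : {set gT}) (U : {set gT * gT})
  : Prop := forall A : zmodType, Hypothesis_ab A -> A_extensible G U A.

(* Main.v *)
Require Import Defs.
From HB Require Import structures.
From mathcomp Require Import all_boot all_order all_algebra all_fingroup all_solvable.
From mathcomp Require Import all_field all_character.
Set Implicit Arguments. Unset Strict Implicit. Unset Printing Implicit Defensive.
Import GRing.Theory Num.Theory.
Local Open Scope ring_scope.
Record Cx := MkCx {cval : algC; cvalP : cval != 0}.
HB.instance Definition _ := [isSub for cval].
HB.instance Definition _ := [Choice of Cx by <:].
Definition cx1 := @MkCx 1 (oner_neq0 algC).
Definition cxmul (a b : Cx) := @MkCx _ (mulf_neq0 (cvalP a) (cvalP b)).
Definition cxinv (a : Cx) := @MkCx _ (invr_neq0 (cvalP a)).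
Lemma cxA : associative cxmul.
Proof. by move=> a b c; apply: val_inj; rewrite /= mulrA. Qed.
Lemma cxC : commutative cxmul.
Proof. by move=> a b; apply: val_inj; rewrite /= mulrC. Qed.
Lemma cx0 : left_id cx1 cxmul.
Proof. by move=> a; apply: val_inj; rewrite /= mul1r. Qed.
Lemma cxN : left_inverse cx1 cxinv cxmul.
Proof. by move=> a; apply: val_inj; rewrite /= mulVf // cvalP. Qed.
HB.instance Definition _ := GRing.isZmodule.Build Cx cxA cxC cx0 cxN.
Lemma cval_add (a b : Cx) : cval (a + b) = cval a * cval b. Proof. by []. Qed.
Lemma cval0 : cval (0 : Cx) = 1. Proof. by []. Qed.
Lemma cval_muln (a : Cx) k : cval (a *+ k) = cval a ^+ k.
Proof. elim: k => [|k IH]; first by rewrite mulr0n expr0. by rewrite mulrS cval_add IH exprS. Qed.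
Lemma cx_eq0 (a : Cx) : (a == 0) = (cval a == 1).
Proof. by []. Qed.
Definition piP : nat_pred := [pred p | prime p].

Lemma cx_torsion (pi : nat_pred) n : (0 < n)%N -> (n`_pi)%N = n ->
  torsion_cyclic_of_order Cx n n.
Proof.
move=> n0 _; have [z pz] := C_prim_root_exists n0.
have z0 : z != 0.
  apply/eqP => e; have := prim_expr_order pz; rewrite e expr0n eqn0Ngt n0 /=.
  by move/eqP; rewrite eq_sym oner_eq0.
exists (MkCx z0); split.
- by apply/eqP; rewrite cx_eq0 cval_muln /= prim_expr_order.
- move=> k /andP[k0 kn]; rewrite cx_eq0 cval_muln /= -(prim_order_dvd pz).
  by rewrite gtnNdvd.
move=> x; split => [/eqP | [k ->]].
  rewrite cx_eq0 cval_muln => /eqP /(prim_rootP pz) [i ei].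
  by exists i; apply: val_inj; change (cval x = cval (MkCx z0 *+ i)); rewrite ei cval_muln.
apply/eqP; rewrite cx_eq0 !cval_muln /= -exprM mulnC exprM (prim_expr_order pz) expr1n.
exact: eqxx.
Qed.

Lemma cx_hyp : Hypothesis_ab Cx.
Proof.
have partP n : (0 < n)%N -> (n`_piP)%N = n.
  move=> n0; apply: part_pnat_id; rewrite /pnat n0 /=; apply/allP => p.
  by rewrite mem_primes => /andP[].
exists piP; split.
- by move=> p.
- by move=> n n0; rewrite partP //; apply: cx_torsion (partP n n0).
move=> pi' pr' tor p; apply/idP/idP => [/pr' // | pp].
apply/negPn/negP => pn.
have p0 : (0 < p)%N by apply: prime_gt0.
have [a [a1 _ hx]] := tor p p0.
have e1 : (p`_pi' = 1)%N by apply/eqP; rewrite partn_eq1 // pnatE // inE pn.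
rewrite e1 mulr1n in a1.
have [w pw] := C_prim_root_exists p0.
have w0 : w != 0.
  apply/eqP => e; have := prim_expr_order pw; rewrite e expr0n eqn0Ngt p0 /=.
  by move/eqP; rewrite eq_sym oner_eq0.
have [k /(congr1 cval)] : exists k, MkCx w0 = a *+ k.
  by apply/hx; apply/eqP; rewrite cx_eq0 cval_muln /= (prim_expr_order pw).
rewrite cval_muln a1 expr1n /= => w1.
have := prim_order_dvd pw 1; rewrite expr1 w1 eqxx dvdn1 => /eqP p1.
by rewrite p1 in pp.
Qed.
Local Close Scope ring_scope.
Local Open Scope group_scope.

Lemma hom_facts (gT : finGroupType) (H : {group gT}) (A : zmodType) (h : gT -> A) :
  (forall x y, x \in H -> y \in H -> h (x * y) = (h x + h y)%R) ->
  h 1 = 0%R /\ (forall x, x \in H -> h x^-1 = (- h x)%R).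
Proof.
move=> hM; have e := hM 1 1 (group1 H) (group1 H); rewrite mulg1 in e.
have h1 : h 1 = 0%R by apply: (addrI (h 1)); rewrite addr0 -e.
split=> // x Hx; apply: (addrI (h x)).
by rewrite -hM ?groupV // mulgV h1 subrr.
Qed.

Lemma der1_ker (gT : finGroupType) (G : {group gT}) (A : zmodType) (h : gT -> A) :
  (forall x y, x \in G -> y \in G -> h (x * y) = (h x + h y)%R) ->
  forall z, z \in G^`(1) -> h z = 0%R.
Proof.
move=> hM; have [h1 hV] := hom_facts hM.
have Kg : group_set [set x in G | h x == 0%R].
  apply/group_setP; split; first by rewrite inE group1 h1 eqxx.
  move=> x y; rewrite !inE => /andP[Gx /eqP hx] /andP[Gy /eqP hy].
  by rewrite groupM // hM // hx hy addr0 eqxx.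
have sub : G^`(1) \subset Group Kg.
  rewrite derg1 gen_subG; apply/subsetP => _ /imset2P[x y Gx Gy ->].
  rewrite inE groupR //= commgEl conjgE !mulgA.
  rewrite !hM; try by repeat (apply: groupM || rewrite groupV).
  by rewrite !hV // (addrC (- h x)%R) addrNK addNr.
by move=> z /(subsetP sub); rewrite inE => /andP[_ /eqP].
Qed.

Lemma key (gT : finGroupType) (G K : {group gT}) (U : {group gT * gT})
  (c : gT * gT -> gT) (e : gT -> gT * gT) :
  abelian K ->
  (forall u v, u \in U -> v \in U -> c (u * v) = c u * c v) ->
  (forall u, u \in U -> c u \in K) ->
  (forall x, x \in K -> e x \in U /\ c (e x) = x) ->
  (forall x, x \in G -> e x \in setX G G) ->
  (forall x y, x \in G -> y \in G -> e (x * y) = e x * e y) ->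
  K :&: G^`(1) != 1 ->
  ~ A_extensible G U Cx.
Proof.
move=> cKK cM cK eK eG eM /trivgPn [z /setIP[Kz G'z] nz1] ext.
have [i zi] : exists i, z \notin cfker ('chi[K]_i)%R.
  apply/existsP; apply: contraR nz1 => /existsPn hz.
  have : z \in \bigcap_i cfker ('chi[K]_i)%R.
    by apply/bigcapP => i _; apply/negPn/hz.
  by rewrite TI_cfker_irr inE.
have lin : (('chi[K]_i)%R \is a linear_char)%R by apply/char_abelianP.
set chi := ('chi[K]_i)%R in zi lin.
pose f (u : gT * gT) : Cx := insubd (0%R : Cx) (chi (c u)).
have fv u : u \in U -> cval (f u) = chi (c u).
  move=> Uu; rewrite /f insubdK //.
  by rewrite unfold_in /= lin_char_neq0 // cK.
have [g [hg eg]] : exists g : gT * gT -> Cx, hom_on (setX G G) g /\ {in U, forall u, g u = f u}.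
  apply: ext => u v Uu Uv; apply: val_inj.
  change (cval (f (u * v)) = cval (f u + f v)%R); rewrite cval_add !fv ?groupM //.
  by rewrite cM // lin_charM // cK.
have hge : forall x y, x \in G -> y \in G -> g (e (x * y)) = (g (e x) + g (e y))%R.
  by move=> x y Gx Gy; rewrite eM // hg // eG.
have := der1_ker hge G'z; have [Ue cez] := eK z Kz.
rewrite eg // => /(congr1 cval); rewrite fv // cez cval0 => /eqP.
by move: zi; rewrite cfkerEirr inE lin_char1 // => /negP.
Qed.

Theorem corollary5p3 (gT : finGroupType) (G : {group gT}) (phi : {perm gT})
  (phiAut : phi \in Aut G) (U : {group gT * gT})
  (hDU : Delta G phi \subset U) (hUG : U \subset setX G G) :
  ((k1 U :&: G^`(1) != 1) && (k1 U \subset 'Z(G))) \/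
  ((k2 U :&: G^`(1) != 1) && (k2 U \subset 'Z(G))) ->
  ~ extensible G U.
Proof.
move=> H ext; have extC := ext Cx cx_hyp.
have psiAut : phi^-1 \in Aut G by rewrite groupV.
have phiM x y : x \in G -> y \in G -> phi (x * y) = phi x * phi y.
  by move=> Gx Gy; rewrite -(autmE phiAut) morphM.
have psiM x y : x \in G -> y \in G -> (phi^-1)%g (x * y) = (phi^-1)%g x * (phi^-1)%g y.
  by move=> Gx Gy; rewrite -(autmE psiAut) morphM.
have phi1 : phi 1 = 1 by rewrite -(autmE phiAut) morph1.
have psi1 : (phi^-1)%g 1 = 1 by rewrite -(autmE psiAut) morph1.
have UG u : u \in U -> u.1 \in G /\ u.2 \in G.
  by case: u => a b /(subsetP hUG); rewrite in_setX => /andP[].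
have DU a : a \in G -> (a, phi a) \in U.
  by move=> Ga; apply: (subsetP hDU); apply: imset_f.
case: H => /andP[nt sZ].
- have kg : group_set (k1 U).
    apply/group_setP; split; first by rewrite inE group1.
    move=> x y; rewrite !inE => Ux Uy; have := groupM Ux Uy.
    by rewrite (_ : (x,1)*(y,1) = (x*y, 1*1)) // mulg1.
  have sZ' : Group kg \subset 'Z(G) by [].
  have cz x y : x \in Group kg -> y \in G -> y * x = x * y.
    move=> /(subsetP sZ') /setIP[_ /centP cx] Gy; exact/esym/cx.
  pose c (u : gT * gT) := u.1 * (phi^-1 u.2)^-1.
  have cK u : u \in U -> c u \in Group kg.
    case: u => a b Uu; have [Ga Gb] := UG _ Uu.
    have Gpb : (phi^-1)%g b \in G by apply: Aut_closed.
    have := groupM Uu (groupVr (DU _ Gpb)).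
    rewrite permKV.
    by rewrite (_ : (a, b) * (phi^-1 b, b)^-1 = (a * (phi^-1 b)^-1, b * b^-1)) // mulgV inE.
  apply: (@key gT G (Group kg) U c (fun x => (x, 1))) => //.
  + exact: abelianS sZ' (center_abelian G).
  + case=> a1 b1 [a2 b2] U1 U2; have [Ga1 Gb1] := UG _ U1; have [Ga2 Gb2] := UG _ U2.
    rewrite /c /= psiM // invMg !mulgA -[RHS]mulgA.
    rewrite -[RHS]mulgA (cz (a2 * ((phi^-1)%g b2)^-1) (((phi^-1)%g b1)^-1)) ?mulgA //.
      exact: (cK (a2, b2)).
    by rewrite groupV Aut_closed.
  + move=> x Kx; split; first by move: Kx; rewrite inE.
    by rewrite /c /= psi1 invg1 mulg1.
  + by move=> x Gx; rewrite in_setX Gx group1.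
  + by move=> x y _ _; rewrite (_ : (x,1)*(y,1) = (x*y,1*1)) // mulg1.
- have kg : group_set (k2 U).
    apply/group_setP; split; first by rewrite inE group1.
    move=> x y; rewrite !inE => Ux Uy; have := groupM Ux Uy.
    by rewrite (_ : (1,x)*(1,y) = (1*1,x*y)) // mulg1.
  have sZ' : Group kg \subset 'Z(G) by [].
  have cz x y : x \in Group kg -> y \in G -> y * x = x * y.
    move=> /(subsetP sZ') /setIP[_ /centP cx] Gy; exact/esym/cx.
  pose c (u : gT * gT) := u.2 * (phi u.1)^-1.
  have cK u : u \in U -> c u \in Group kg.
    case: u => a b Uu; have [Ga Gb] := UG _ Uu.
    have := groupM Uu (groupVr (DU _ Ga)).
    by rewrite (_ : (a, b) * (a, phi a)^-1 = (a * a^-1, b * (phi a)^-1)) // mulgV inE.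
  apply: (@key gT G (Group kg) U c (fun x => (1, x))) => //.
  + exact: abelianS sZ' (center_abelian G).
  + case=> a1 b1 [a2 b2] U1 U2; have [Ga1 Gb1] := UG _ U1; have [Ga2 Gb2] := UG _ U2.
    rewrite /c /= phiM // invMg !mulgA -[RHS]mulgA.
    rewrite -[RHS]mulgA (cz (b2 * (phi a2)^-1) ((phi a1)^-1)) ?mulgA //.
      exact: (cK (a2, b2)).
    by rewrite groupV Aut_closed.
  + move=> x Kx; split; first by move: Kx; rewrite inE.
    by rewrite /c /= phi1 invg1 mulg1.
  + by move=> x Gx; rewrite in_setX Gx group1.
  + by move=> x y _ _; rewrite (_ : (1,x)*(1,y) = (1*1,x*y)) // mulg1.
Qed.
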